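(* Let $M\in\mathbb{R}^{p\times q}_+$ be a nonnegative matrix whose entries sum to $1$, and let $k\ge1$. The following are equivalent: (i) there exist $A_1,\dots,A_p,B_1,\dots,B_q\in\mathcal{S}^k_+$ with $M_{ij}=\langle A_i,B_j\rangle$ for all $i,j$; (ii) there exist $F_1,\dots,F_p\in\mathcal{S}^k_+$ with $\sum_{i=1}^pF_i=I_k$, $G_1,\dots,G_q\in\mathcal{S}^k_+$ with $\sum_{j=1}^qG_j=I_k$, and $\rho\in\mathcal{S}^{k^2}_+$ with $\operatorname{trace}(\rho)=1$, such that \[ M_{ij}=\operatorname{trace}\big((F_i\otimes G_j)\rho\big)\quad\text{for all } i=1,\dots,p,\ j=1,\dots,q, \] where $\otimes$ denotes the Kronecker product.
   Context: $\mathcal{S}^k_+$ denotes the cone of $k\times k$ real symmetric positive semidefinite matrices, $\langle A,B\rangle=\operatorname{trace}(AB)$, and $I_k$ is the $k\times k$ identity matrix. *)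

(* Defs.v *)
(* Scalars: an arbitrary real closed field R (covers the reals). *)
From HB Require Import structures.
From mathcomp Require Import all_boot all_order all_algebra.
Set Implicit Arguments. Unset Strict Implicit. Unset Printing Implicit Defensive.
Import Order.TTheory GRing.Theory Num.Theory.
Local Open Scope ring_scope.

Definition psd (R : realFieldType) (k : nat) (A : 'M[R]_k) : Prop :=
  A^T = A /\ forall v : 'cV[R]_k, 0 <= (v^T *m A *m v) 0 0.

(* Kronecker product: row index of A (x) B is the pair (i1,i2) : 'I_m1 * 'I_m2
   flattened lexicographically (i1 major), i.e. i1 * m2 + i2, as in mxvec. *)
Definition kron (R : pzRingType) (m1 n1 m2 n2 : nat)
  (A : 'M[R]_(m1, n1)) (B : 'M[R]_(m2, n2)) : 'M[R]_(m1 * m2, n1 * n2) :=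
  \matrix_(a, b)
    let ii := enum_val (cast_ord (esym (mxvec_cast m1 m2)) a) in
    let jj := enum_val (cast_ord (esym (mxvec_cast n1 n2)) b) in
    A ii.1 jj.1 * B ii.2 jj.2.

(* Main.v *)
Require Import Defs.
From HB Require Import structures.
From mathcomp Require Import all_boot all_order all_algebra.
From mathcomp Require Import ring lra.
Import Order.TTheory GRing.Theory Num.Theory.
Local Open Scope ring_scope.
Set Implicit Arguments. Unset Strict Implicit. Unset Printing Implicit Defensive.

Section Psd.
Variable R : rcfType.
Variable k : nat.
Implicit Types (A B T : 'M[R]_k) (v : 'cV[R]_k).

Lemma psd_congr (P : 'M[R]_k) A : psd A -> psd (P *m A *m P^T).
Proof.
case=> As Ap; split.
  by rewrite !trmx_mul trmxK As mulmxA.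
move=> v; have := Ap (P^T *m v).
by rewrite trmx_mul trmxK !mulmxA.
Qed.

Lemma psd0 : psd (0 : 'M[R]_k).
Proof. by split; [rewrite trmx0| move=> v; rewrite mulmx0 mul0mx mxE]. Qed.

Lemma psdD A B : psd A -> psd B -> psd (A + B).
Proof.
case=> As Ap [Bs Bp]; split; first by rewrite linearD /= As Bs.
by move=> v; rewrite mulmxDr mulmxDl mxE addr_ge0.
Qed.

Lemma psdZ (c : R) A : 0 <= c -> psd A -> psd (c *: A).
Proof.
move=> c0 [As Ap]; split; first by rewrite linearZ /= As.
by move=> v; rewrite -scalemxAr -scalemxAl mxE mulr_ge0.
Qed.

Lemma psd_sum (I : finType) (F : I -> 'M[R]_k) :
  (forall i, psd (F i)) -> psd (\sum_i F i).
Proof. by move=> H; apply: big_ind => //; [exact: psd0| exact: psdD]. Qed.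

Lemma qf_delta A (a b : 'I_k) :
  ((delta_mx a (0:'I_1) : 'cV[R]_k)^T *m A *m delta_mx b (0:'I_1)) 0 0 = A a b.
Proof. by rewrite trmx_delta -rowE -colE !mxE. Qed.

Lemma qf_deltaM A (a b : 'I_k) :
  ((delta_mx a (0:'I_1) : 'cV[R]_k)^T *m A *m delta_mx b (0:'I_1)) = (A a b)%:M.
Proof. by apply/matrixP=> i j; rewrite !ord1 qf_delta mxE eqxx mulr1n. Qed.

Lemma psd_diag_ge0 A a : psd A -> 0 <= A a a.
Proof. by case=> _ /(_ (delta_mx a 0)); rewrite qf_delta. Qed.

Lemma psd_sym A a b : psd A -> A a b = A b a.
Proof. by case=> As _; rewrite -{1}As mxE. Qed.

Lemma psd_row0 A l b : psd A -> A l l = 0 -> A l b = 0.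
Proof.
move=> PA All; have [//|xn0] := eqVneq (A l b) 0.
exfalso.
set x := A l b.
pose t := - (A b b + 1) / (2 * x).
pose v : 'cV[R]_k := t *: delta_mx l 0 + delta_mx b 0.
have := PA.2 v.
rewrite /v !linearD !linearZ /= !mulmxDl -!scalemxAl.  rewrite !qf_deltaM !mxE !eqxx !mulr1n All (psd_sym b l PA) -/x.
have -> : t * (t * 0 + x) + (t * x + A b b) = 2 * x * t + A b b.
  by ring.
have -> : 2 * x * t = - (A b b + 1).
  by rewrite /t mulrC -mulrA mulVf ?mulr1 // mulf_neq0 // pnatr_eq0.
move=> H; lra.
Qed.


Lemma elim_formula T (w : 'cV[R]_k) (l a b : 'I_k) :
  ((1%:M - w *m delta_mx 0 l) *m T *m (1%:M - w *m delta_mx 0 l)^T) a b = T a b - w a 0 * T l b - (T a l - w a 0 * T l l) * w b 0.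
Proof.
rewrite linearB /= trmx1 trmx_mul trmx_delta.
rewrite mulmxBl mul1mx -mulmxA -rowE mulmxBr mulmx1 !mulmxA -colE.
by rewrite !mxE !big_ord1 !mxE big_ord1 !mxE.
Qed.

Lemma elim_unit (w : 'cV[R]_k) (l : 'I_k) : w l 0 = 0 ->
  (1%:M - w *m delta_mx 0 l) \in unitmx.
Proof.
move=> wl; suff /mulmx1_unit[] : (1%:M - w *m delta_mx 0 l) *m (1%:M + w *m delta_mx 0 l) = 1%:M by [].
have e0 : delta_mx (0:'I_1) l *m w = 0.
  by rewrite -rowE; apply/matrixP=> i j; rewrite !ord1 !mxE wl.
rewrite mulmxBl !mulmxDr !mulmx1 !mul1mx -!mulmxA (mulmxA (delta_mx 0 l)) e0.
by rewrite mul0mx mulmx0 addr0 addrK.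
Qed.

Lemma diag_induct S : psd S -> forall m, (m <= k)%N ->
  exists P : 'M[R]_k, P \in unitmx /\
    (forall a b : 'I_k, a != b -> ((a < m) || (b < m))%N -> (P *m S *m P^T) a b = 0).
Proof.
move=> PS; elim=> [_|m IH mk].
  by exists 1%:M; split; [exact: unitmx1|move=> a b _; rewrite !ltn0].
have [P [Pu HP]] := IH (ltnW mk).
set T := P *m S *m P^T in HP.
have PT : psd T by exact: psd_congr.
pose l := Ordinal mk.
have HS (a : 'I_k) : (a < m.+1)%N -> (a < m)%N \/ a = l.
  rewrite ltnS leq_eqVlt => /orP[/eqP e|]; [right; apply: val_inj; exact: e|by left].
have [c0|cn0] := eqVneq (T l l) 0.
  exists P; split=> // a b ab /orP[/HS|/HS] [am|->].
  - by apply: HP => //; rewrite am.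
  - exact: psd_row0 PT c0.
  - by apply: HP => //; rewrite am orbT.
  - by rewrite (psd_sym _ _ PT); exact: psd_row0 PT c0.
set c := T l l in cn0.
pose w : 'cV[R]_k := \col_a (T a l / c - (a == l)%:R).
have wl : w l 0 = 0 by rewrite mxE eqxx divff // subrr.
have wa a : a != l -> w a 0 = T a l / c.
  by move=> /negPf al; rewrite mxE al subr0.
exists ((1%:M - w *m delta_mx 0 l) *m P); split.
  by rewrite unitmx_mul elim_unit.
move=> a b ab H.
rewrite trmx_mul !mulmxA -(mulmxA _ P) -(mulmxA _ (P *m S)) -/T.
rewrite elim_formula.
have [al|al] := eqVneq a l.
  rewrite al wl mul0r subr0 mul0r subr0.
  have bl : b != l by rewrite -al eq_sym.
  by rewrite wa // -/c mulrC mulfVK // (psd_sym _ _ PT) subrr.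
have [bl|bl] := eqVneq b l.
  by rewrite bl wl mulr0 subr0 wa // -/c mulfVK // subrr.
have Hab : ((a < m) || (b < m))%N.
  by case/orP: H => /HS [->|e] //; [rewrite e eqxx in al| rewrite orbT| rewrite e eqxx in bl].
case/orP: Hab => [am|bm].
  have Tal : T a l = 0 by apply: HP => //; rewrite am.
  have Tab : T a b = 0 by apply: HP => //; rewrite am.
  by rewrite wa // Tal Tab; ring.
have Tbl : T b l = 0 by apply: HP => //; rewrite bm.
have Tlb : T l b = 0 by apply: HP; [rewrite eq_sym| rewrite bm orbT].
have Tab : T a b = 0 by apply: HP => //; rewrite bm orbT.
by rewrite (wa b) // Tbl Tlb Tab; ring.
Qed.


Lemma psd_diagonalize S : psd S -> exists P : 'M[R]_k, P \in unitmx /\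
  exists d : 'I_k -> bool, P *m S *m P^T = diag_mx (\row_a (d a)%:R).
Proof.
move=> PS; have [P [Pu HP]] := diag_induct PS (leqnn k).
set D := P *m S *m P^T in HP.
have PD : psd D by exact: psd_congr.
pose x : 'rV[R]_k := \row_a (if D a a == 0 then 1 else (Num.sqrt (D a a))^-1).
exists (diag_mx x *m P); split.
  rewrite unitmx_mul Pu andbT unitmxE det_diag unitfE.
  apply/prodf_neq0 => a _; rewrite mxE; case: ifP => [_|/negbT Dn0].
    exact: oner_neq0.
  rewrite invr_neq0 // sqrtr_eq0 -ltNge lt_def Dn0 /=.
  exact: psd_diag_ge0.
exists (fun a => D a a != 0).
rewrite trmx_mul tr_diag_mx !mulmxA -(mulmxA _ P) -(mulmxA _ (P *m S)) -/D; clearbody D.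
rewrite mul_mx_diag mul_diag_mx; apply/matrixP => a b; rewrite !mxE.
have [<-|ab] := eqVneq a b; last by rewrite (HP a b) ?ltn_ord ?mulr0 ?mul0r ?mulr0n.
rewrite mulr1n; case: ifP => [/eqP ->|/negbT Dn0]; first by rewrite mulr0 mul0r.
rewrite -{2}(@sqr_sqrtr _ (D a a)); last exact: psd_diag_ge0.
have sn0 : Num.sqrt (D a a) != 0.
  rewrite sqrtr_eq0 -ltNge lt_def Dn0 /=; exact: psd_diag_ge0.
by rewrite expr2 mulrA mulVf // mul1r mulfV.
Qed.


Lemma psd_diag01 (d : 'I_k -> bool) : psd (diag_mx (\row_a (d a)%:R : 'rV[R]_k)).
Proof.
split; first by rewrite tr_diag_mx.
move=> v; rewrite mul_mx_diag mxE; apply: sumr_ge0 => j _; rewrite !mxE.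
have -> : v j 0 * (d j)%:R * v j 0 = (d j)%:R * (v j 0 ^+ 2) by rewrite expr2; ring.
by rewrite mulr_ge0 ?ler0n ?sqr_ge0.
Qed.

Lemma mxtrace_diag_mul (d : 'I_k -> bool) (Y : 'M[R]_k) :
  \tr (diag_mx (\row_a (d a)%:R : 'rV[R]_k) *m Y) = \sum_a (d a)%:R * Y a a.
Proof. by rewrite mul_diag_mx; apply: eq_bigr => a _; rewrite !mxE. Qed.

Lemma tr_psd_ge0 (G X : 'M[R]_k) : psd G -> psd X -> 0 <= \tr (G *m X).
Proof.
move=> PG PX; have [P [Pu [d Hd]]] := psd_diagonalize PG.
have PTu : P^T \in unitmx by rewrite unitmx_tr.
have -> : G = invmx P *m (P *m G *m P^T) *m invmx P^T.
  by rewrite !mulmxA mulmxK // mulVmx // mul1mx.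
rewrite Hd -!mulmxA mxtrace_mulC -mulmxA.
set Y := (_ *m _ *m invmx P).
have PY : psd Y.
  have := psd_congr (invmx P)^T PX; rewrite trmxK trmx_inv.
  by rewrite /Y.
rewrite mxtrace_diag_mul; apply: sumr_ge0 => a _.
by rewrite mulr_ge0 ?ler0n ?psd_diag_ge0.
Qed.

Lemma normalize_family (I : finType) (i0 : I) (X : I -> 'M[R]_k) :
  (forall i, psd (X i)) ->
  exists W : 'M[R]_k, exists Y : I -> 'M[R]_k,
    (forall i, psd (Y i)) /\ \sum_i Y i = 1%:M /\
    forall i, X i = W *m Y i *m W^T.
Proof.
move=> PX; have PS := psd_sum PX.
have [P [Pu [d Hd]]] := psd_diagonalize PS.
set Pi := diag_mx _ in Hd.
pose A i := P *m X i *m P^T.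
have PA i : psd (A i) by exact: psd_congr.
have SA : \sum_i A i = Pi by rewrite -Hd mulmx_sumr mulmx_suml.
have A0 i a b : ~~ d a -> A i a b = 0.
  move=> da; apply: psd_row0 (PA i) _.
  apply/eqP; rewrite eq_le psd_diag_ge0 // andbT.
  have : \sum_j A j a a = 0.
    by rewrite -summxE SA !mxE (negbTE da) mul0rn.
  rewrite (bigD1 i) //= => <-; rewrite lerDl.
  by apply: sumr_ge0 => j _; exact: psd_diag_ge0.
pose Dc : 'M[R]_k := diag_mx (\row_a (~~ d a)%:R).
exists (invmx P *m Pi), (fun i => A i + (i == i0)%:R *: Dc); split; [|split].
- move=> i; apply: psdD => //; apply: psdZ; first exact: ler0n.
  exact: psd_diag01.
- rewrite big_split /= SA -scaler_suml (bigD1 i0) //= eqxx big1 ?addr0.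
    rewrite scale1r; apply/matrixP => a b; rewrite !mxE.
    by case: (d a); case: (a == b); rewrite /= ?mulr1n ?mulr0n ?addr0 ?add0r.
  by move=> j /negPf ->.
move=> i.
have key : Pi *m (A i + (i == i0)%:R *: Dc) *m Pi = A i.
  move: (A i) (PA i) (A0 i) => Ai PAi A0i.
  rewrite /Pi mul_mx_diag mul_diag_mx; apply/matrixP => a b; rewrite !mxE.
  case da : (d a); case db : (d b).
  - have [<-|ab] := eqVneq a b; first by rewrite /= mulr1n mulr0 addr0 mul1r mulr1.
    by rewrite mulr0n mulr0 addr0 mul1r mulr1.
  - by rewrite mulr0 (psd_sym _ _ PAi) A0i ?db.
  - by rewrite !mul0r A0i ?da.
  - by rewrite !mul0r A0i ?da.
rewrite trmx_mul /Pi tr_diag_mx -/Pi.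
have -> : invmx P *m Pi *m (A i + (i == i0)%:R *: Dc) *m (Pi *m (invmx P)^T)
   = invmx P *m (Pi *m (A i + (i == i0)%:R *: Dc) *m Pi) *m (invmx P)^T.
  by rewrite !mulmxA.
rewrite key /A trmx_inv -!mulmxA mulKmx // mulmxA mulmxK //.
by rewrite unitmx_tr.
Qed.


Definition phi (a : 'I_(k * k)) : 'I_k * 'I_k :=
  enum_val (cast_ord (esym (mxvec_cast k k)) a).
Definition psi (x : 'I_k * 'I_k) : 'I_(k * k) :=
  cast_ord (mxvec_cast k k) (enum_rank x).

Lemma phiK : cancel phi psi.
Proof. by move=> a; rewrite /phi /psi enum_valK cast_ordKV. Qed.
Lemma psiK : cancel psi phi.
Proof. by move=> x; rewrite /phi /psi cast_ordK enum_rankK. Qed.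

Lemma kronE (F G : 'M[R]_k) a b :
  kron F G a b = F (phi a).1 (phi b).1 * G (phi a).2 (phi b).2.
Proof. by rewrite /kron mxE. Qed.

Lemma sum_kk (f : 'I_(k * k) -> R) :
  \sum_a f a = \sum_x \sum_y f (psi (x, y)).
Proof.
rewrite pair_big /= (reindex psi) //=.
  by apply: eq_bigr => -[x y].
by exists phi => x _; [exact: psiK| exact: phiK].
Qed.

Lemma qfE n (A : 'M[R]_n) (v : 'cV[R]_n) :
  (v^T *m A *m v) 0 0 = \sum_a \sum_b v a 0 * A a b * v b 0.
Proof.
rewrite mxE exchange_big /=; apply: eq_bigr => b _; rewrite mxE mulr_suml.
by apply: eq_bigr => a _; rewrite mxE.
Qed.

Lemma trE n (A B : 'M[R]_n) : \tr (A *m B) = \sum_a \sum_b A a b * B b a.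
Proof. by apply: eq_bigr => a _; rewrite mxE. Qed.

End Psd.

Section Dir2.
Variable R : rcfType.
Variable k : nat.

Definition Bof (G : 'M[R]_k) (rho : 'M[R]_(k * k)) : 'M[R]_k :=
  \matrix_(b1, a1) \sum_a2 \sum_b2 G a2 b2 * rho (psi (b1, b2)) (psi (a1, a2)).

Lemma tr_kron_B (F G : 'M[R]_k) (rho : 'M[R]_(k * k)) :
  \tr (kron F G *m rho) = \tr (F *m Bof G rho).
Proof.
rewrite !trE sum_kk; apply: eq_bigr => a1 _.
under eq_bigr do rewrite sum_kk.
rewrite exchange_big /=; apply: eq_bigr => b1 _.
rewrite mxE mulr_sumr; apply: eq_bigr => a2 _.
rewrite mulr_sumr; apply: eq_bigr => b2 _.
by rewrite kronE !psiK /= mulrA.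
Qed.


Lemma swap23 (f : 'I_k -> 'I_k -> 'I_k -> 'I_k -> R) :
  \sum_a \sum_b \sum_c \sum_d f a b c d = \sum_a \sum_c \sum_b \sum_d f a b c d.
Proof. by apply: eq_bigr => a _; rewrite exchange_big. Qed.
Lemma swap34 (f : 'I_k -> 'I_k -> 'I_k -> 'I_k -> R) :
  \sum_a \sum_b \sum_c \sum_d f a b c d = \sum_a \sum_b \sum_d \sum_c f a b c d.
Proof. by apply: eq_bigr => a _; apply: eq_bigr => b _; rewrite exchange_big. Qed.
Lemma swap12 (f : 'I_k -> 'I_k -> 'I_k -> 'I_k -> R) :
  \sum_a \sum_b \sum_c \sum_d f a b c d = \sum_b \sum_a \sum_c \sum_d f a b c d.
Proof. by rewrite exchange_big. Qed.

Lemma psd_Bof (G : 'M[R]_k) (rho : 'M[R]_(k * k)) :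
  psd G -> psd rho -> psd (Bof G rho).
Proof.
move=> PG Prho; split.
  apply/matrixP => x y; rewrite !mxE exchange_big /=.
  apply: eq_bigr => a _; apply: eq_bigr => b _.
  by rewrite (psd_sym _ _ PG) (psd_sym _ _ Prho).
move=> v.
pose X : 'M[R]_k := \matrix_(b2, a2)
  \sum_b1 \sum_a1 v b1 0 * rho (psi (b1, b2)) (psi (a1, a2)) * v a1 0.
have -> : (v^T *m Bof G rho *m v) 0 0 = \tr (G *m X).
  rewrite qfE trE.
  transitivity (\sum_b1 \sum_a1 \sum_a2 \sum_b2
      v b1 0 * (G a2 b2 * rho (psi (b1, b2)) (psi (a1, a2))) * v a1 0).
    apply: eq_bigr => b1 _; apply: eq_bigr => a1 _.
    rewrite mxE mulr_sumr mulr_suml; apply: eq_bigr => a2 _.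
    by rewrite mulr_sumr mulr_suml.
  rewrite swap23 swap34 swap12 swap23.
  apply: eq_bigr => a2 _; apply: eq_bigr => b2 _.
  rewrite mxE mulr_sumr; apply: eq_bigr => b1 _.
  rewrite mulr_sumr; apply: eq_bigr => a1 _.
  ring.
apply: tr_psd_ge0 => //; split.
  apply/matrixP => x y; rewrite !mxE exchange_big /=.
  apply: eq_bigr => a _; apply: eq_bigr => b _.
  by rewrite (psd_sym _ _ Prho); ring.
move=> u.
pose z : 'cV[R]_(k * k) := \col_c (v (phi c).1 0 * u (phi c).2 0).
have := Prho.2 z; rewrite !qfE sum_kk.
congr (_ <= _).
transitivity (\sum_b1 \sum_b2 \sum_a1 \sum_a2
   u b2 0 * (v b1 0 * rho (psi (b1, b2)) (psi (a1, a2)) * v a1 0) * u a2 0).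
  apply: eq_bigr => b1 _; apply: eq_bigr => b2 _.
  rewrite sum_kk; apply: eq_bigr => a1 _; apply: eq_bigr => a2 _.
  by rewrite !mxE !psiK /=; ring.
rewrite swap12 swap34 swap23.
apply: eq_bigr => b2 _; apply: eq_bigr => a2 _.
rewrite mxE mulr_sumr mulr_suml; apply: eq_bigr => b1 _.
by rewrite mulr_sumr mulr_suml.
Qed.


Definition vecW (W : 'M[R]_k) : 'cV[R]_(k * k) := \col_c W (phi c).1 (phi c).2.

Lemma psd_rho (W : 'M[R]_k) : psd (vecW W *m (vecW W)^T).
Proof.
split; first by rewrite trmx_mul trmxK.
move=> z; rewrite -!mulmxA mulmxA.
rewrite mxE big_ord1.
have -> : ((vecW W)^T *m z) 0 0 = (z^T *m vecW W) 0 0.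
  by rewrite -[in RHS](trmxK (vecW W)) -trmx_mul [RHS]mxE.
by rewrite -expr2 sqr_ge0.
Qed.

Lemma tr_rho (W : 'M[R]_k) : \tr (vecW W *m (vecW W)^T) = \tr (W *m W^T).
Proof.
rewrite /mxtrace sum_kk; apply: eq_bigr => x _; rewrite mxE.
by apply: eq_bigr => y _; rewrite !mxE big_ord1 !mxE psiK.
Qed.

Lemma kron_rho (F G W : 'M[R]_k) : G^T = G ->
  \tr (kron F G *m (vecW W *m (vecW W)^T)) = \tr (F *m (W *m G *m W^T)).
Proof.
move=> Gs; rewrite !trE.
transitivity (\sum_a1 \sum_a2 \sum_b1 \sum_b2
   F a1 b1 * G a2 b2 * (W b1 b2 * W a1 a2)).
  rewrite sum_kk; apply: eq_bigr => a1 _; apply: eq_bigr => a2 _.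
  rewrite sum_kk; apply: eq_bigr => b1 _; apply: eq_bigr => b2 _.
  by rewrite kronE !mxE big_ord1 !mxE !psiK.
rewrite swap23; apply: eq_bigr => a1 _; apply: eq_bigr => b1 _.
rewrite mxE mulr_sumr; apply: eq_bigr => a2 _.
rewrite mxE mulr_suml mulr_sumr; apply: eq_bigr => b2 _.
rewrite !mxE -{1}Gs mxE; ring.
Qed.

End Dir2.

Theorem proposition3p7 (R : rcfType) (p q k : nat) (M : 'M[R]_(p, q))
  (HMnn : forall i j, 0 <= M i j)
  (HMsum : \sum_(i < p) \sum_(j < q) M i j = 1)
  (Hk : (0 < k)%N) :
  (exists (A : 'I_p -> 'M[R]_k) (B : 'I_q -> 'M[R]_k),
      (forall i, psd (A i)) /\ (forall j, psd (B j)) /\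
      (forall i j, M i j = \tr (A i *m B j)))
  <->
  (exists (F : 'I_p -> 'M[R]_k) (G : 'I_q -> 'M[R]_k) (rho : 'M[R]_(k * k)),
      (forall i, psd (F i)) /\ \sum_(i < p) F i = 1%:M /\
      (forall j, psd (G j)) /\ \sum_(j < q) G j = 1%:M /\
      psd rho /\ \tr rho = 1 /\
      (forall i j, M i j = \tr (kron (F i) (G j) *m rho))).
Proof.
split; last first.
  move=> [F [G [rho [PF [_ [PG [_ [Prho [_ HM]]]]]]]]].
  exists F, (fun j => Bof (G j) rho); split; first by [].
  split; first by move=> j; exact: psd_Bof.
  by move=> i j; rewrite HM tr_kron_B.
move=> [A [B [PA [PB HM]]]].
have [i0 _|nop] := pickP (@predT 'I_p); last first.
  by move: HMsum; rewrite big_pred0 // => /eqP; rewrite eq_sym oner_eq0.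
have [j0 _|noq] := pickP (@predT 'I_q); last first.
  move: HMsum; rewrite big1 => [/eqP|i _]; first by rewrite eq_sym oner_eq0.
  exact: big_pred0.
have [W1 [F [PF [SF HA]]]] := normalize_family i0 PA.
pose C j := W1^T *m B j *m W1.
have PC j : psd (C j) by have := psd_congr W1^T (PB j); rewrite trmxK.
have [W2 [G [PG [SG HC]]]] := normalize_family j0 PC.
have key i j : M i j = \tr (F i *m (W2 *m G j *m W2^T)).
  rewrite HM HA -HC /C -!mulmxA mxtrace_mulC !mulmxA.
  done.
exists F, G, (vecW W2 *m (vecW W2)^T).
split; first by []. split; first by [].
split; first by []. split; first by [].
split; first exact: psd_rho.
split; last by move=> i j; rewrite kron_rho ?key //; case: (PG j).
rewrite tr_rho -HMsum.
under eq_bigr do under eq_bigr do rewrite key.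
under eq_bigr do rewrite -raddf_sum -mulmx_sumr -mulmx_suml -mulmx_sumr SG mulmx1.
by rewrite -raddf_sum -mulmx_suml SF mul1mx.
Qed.
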